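(* For any integers $M,s>0$ there exists $\varepsilon_1(M,s)>0$ such that for every $\varepsilon<\varepsilon_1(M,s)$ and every $L\le M$, there exist linear combinations of the first $L$ eigenfunctions of the Laplacian on $G(s,\varepsilon)$ having exactly $L-1+(L-1)(s-1)$ zeroes on the small edges.
   Context: $G(s,\varepsilon)$ is the star graph with one central vertex, one edge of length $1$ and $s$ edges (''small edges'') of length $\varepsilon$, each joining the central vertex to a degree-one vertex. The Laplacian $-\frac{d^2}{dx^2}$ acts edgewise with Dirichlet conditions at the degree-one vertices and Neumann–Kirchhoff conditions at the central vertex (continuity and vanishing sum of outgoing derivatives); eigenvalues are ordered increasingly with multiplicity and $f_1,f_2,\dots$ are corresponding $L^2$-orthogonal eigenfunctions. Zeroes at the degree-one vertices are not counted. *)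

(* Defs.v *)
From Stdlib Require Import Reals Lra Lia List.
From Coquelicot Require Import Coquelicot.
Open Scope R_scope.

(* Every edge is parametrised by
   its distance x from the central vertex:
   - the long edge is [0,1], x = 0 the centre, x = 1 the degree-one vertex;
   - small edge j (j < s) is [0,eps], x = 0 the centre, x = eps the leaf. *)
Record gfun := mkGfun { ge : R -> R ; se : nat -> R -> R }.

Fixpoint sumR (n : nat) (f : nat -> R) : R :=
  match n with O => 0 | S m => sumR m f + f m end.

Definition edge_eq (l lam : R) (u : R -> R) : Prop :=
  exists u1 : R -> R, forall x, 0 <= x <= l ->
    is_derive u x (u1 x) /\ is_derive u1 x (- lam * u x).

Definition gnonzero (s : nat) (eps : R) (g : gfun) : Prop :=
  (exists x, 0 <= x <= 1 /\ ge g x <> 0) \/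
  (exists j x, (j < s)%nat /\ 0 <= x <= eps /\ se g j x <> 0).

(* g is an eigenfunction with eigenvalue lam of the Laplacian on G(s,eps):
   Dirichlet at degree-one vertices, Neumann–Kirchhoff at the centre
   (continuity + vanishing sum of outgoing derivatives). *)
Definition is_eigen (s : nat) (eps lam : R) (g : gfun) : Prop :=
  edge_eq 1 lam (ge g) /\ ge g 1 = 0 /\
  (forall j, (j < s)%nat ->
     edge_eq eps lam (se g j) /\ se g j eps = 0 /\ se g j 0 = ge g 0) /\
  Derive (ge g) 0 + sumR s (fun j => Derive (se g j) 0) = 0 /\
  gnonzero s eps g.

Definition ginner (s : nat) (eps : R) (f g : gfun) : R :=
  RInt (fun x => ge f x * ge g x) 0 1 +
  sumR s (fun j => RInt (fun x => se f j x * se g j x) 0 eps).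

Definition geq (s : nat) (eps : R) (f g : gfun) : Prop :=
  (forall x, 0 <= x <= 1 -> ge f x = ge g x) /\
  (forall j x, (j < s)%nat -> 0 <= x <= eps -> se f j x = se g j x).

Definition lincomb (a : nat -> R) (n : nat) (f : nat -> gfun) : gfun :=
  mkGfun (fun x => sumR n (fun k => a k * ge (f k) x))
         (fun j x => sumR n (fun k => a k * se (f k) j x)).

(* (lam k, f k), k = 0,1,2,... (f 0 is "f_1") is the full sequence of
   eigenvalues, in nondecreasing order and repeated with multiplicity,
   with pairwise L^2-orthogonal eigenfunctions: every eigenfunction with
   eigenvalue mu is a finite combination of the f k with lam k = mu. *)
Definition spectral_seq (s : nat) (eps : R) (lam : nat -> R) (f : nat -> gfun)
  : Prop :=
  (forall k, is_eigen s eps (lam k) (f k)) /\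
  (forall k, lam k <= lam (S k)) /\
  (forall k m, k <> m -> ginner s eps (f k) (f m) = 0) /\
  (forall mu g, is_eigen s eps mu g ->
     exists (n : nat) (a : nat -> R),
       (forall k, (k < n)%nat -> a k <> 0 -> lam k = mu) /\
       geq s eps g (lincomb a n f)).

(* g has exactly N zeroes on the small edges: zeroes at the leaves are not
   counted; interior zeroes of each small edge are counted, and the central
   vertex (a single point of the metric graph) counts once if g vanishes
   there.  In particular the zero set must be finite. *)
Definition small_zero_count (s : nat) (eps : R) (g : gfun) (N : nat) : Prop :=
  exists lst : list (nat * R),
    NoDup lst /\
    (forall p, In p lst <->
       ((fst p < s)%nat /\ 0 < snd p < eps /\ se g (fst p) (snd p) = 0)) /\
    ((ge g 0 <> 0 /\ length lst = N) \/ (ge g 0 = 0 /\ S (length lst) = N)).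

(* Main.v *)
Require Import Defs.
From Stdlib Require Import Reals Lra Lia List FinFun.
From Coquelicot Require Import Coquelicot.
Open Scope R_scope.

Lemma is_derive_eq (f : R -> R) x l l' : is_derive f x l -> l = l' -> is_derive f x l'.
Proof. intros H ->; exact H. Qed.

Lemma is_derive_mult' (f g : R -> R) x df dg :
  is_derive f x df -> is_derive g x dg ->
  is_derive (fun y => f y * g y) x (df * g x + f x * dg).
Proof.
  intros Hf Hg. apply (is_derive_mult f g x df dg Hf Hg). intros; apply Rmult_comm.
Qed.

Lemma is_derive_plus' (f g : R -> R) x df dg :
  is_derive f x df -> is_derive g x dg ->
  is_derive (fun y => f y + g y) x (df + dg).
Proof. intros Hf Hg. apply (is_derive_plus f g x df dg Hf Hg). Qed.

Lemma is_derive_minus' (f g : R -> R) x df dg :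
  is_derive f x df -> is_derive g x dg ->
  is_derive (fun y => f y - g y) x (df - dg).
Proof. intros Hf Hg. apply (is_derive_minus f g x df dg Hf Hg). Qed.

Lemma is_derive_cont (f : R -> R) x l : is_derive f x l -> continuity_pt f x.
Proof.
  intros H. apply derivable_continuous_pt. exists l. apply is_derive_Reals; exact H.
Qed.

Lemma sumR_ext n f g : (forall i, (i < n)%nat -> f i = g i) -> sumR n f = sumR n g.
Proof.
  induction n; simpl; intros H; auto.
  rewrite IHn by (intros; apply H; lia). rewrite H by lia. reflexivity.
Qed.

Lemma sumR_plus n f g : sumR n (fun i => f i + g i) = sumR n f + sumR n g.
Proof. induction n; simpl; [ring|rewrite IHn; ring]. Qed.

Lemma sumR_scal n c f : sumR n (fun i => c * f i) = c * sumR n f.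
Proof. induction n; simpl; [ring|rewrite IHn; ring]. Qed.

Lemma sumR_const n c : sumR n (fun _ => c) = INR n * c.
Proof. induction n; simpl sumR; [simpl; ring| rewrite IHn, S_INR; ring]. Qed.

Lemma sumR_zero n f : (forall i, (i < n)%nat -> f i = 0) -> sumR n f = 0.
Proof. intros H. rewrite (sumR_ext n f (fun _ => 0)) by auto. rewrite sumR_const; ring. Qed.

Lemma sumR_nonzero n f : sumR n f <> 0 -> exists i, (i < n)%nat /\ f i <> 0.
Proof.
  intros H. destruct (Classical_Prop.classic (exists i, (i < n)%nat /\ f i <> 0)) as [?|C]; auto.
  exfalso. apply H. apply sumR_zero. intros i Hi.
  destruct (Req_dec (f i) 0); auto. exfalso; apply C; eauto.
Qed.

Lemma is_derive_sumR n (f : nat -> R -> R) (df : nat -> R) x :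
  (forall i, (i < n)%nat -> is_derive (f i) x (df i)) ->
  is_derive (fun y => sumR n (fun i => f i y)) x (sumR n df).
Proof.
  induction n; simpl; intros H.
  - auto_derive; auto.
  - apply is_derive_plus'. apply IHn; intros; apply H; lia. apply H; lia.
Qed.

Lemma finite_choice (P : nat -> R -> Prop) n :
  (forall i, (i < n)%nat -> exists x, P i x) -> exists f : nat -> R, forall i, (i < n)%nat -> P i (f i).
Proof.
  induction n; intros H.
  - exists (fun _ => 0). intros; lia.
  - destruct IHn as [f Hf]. intros; apply H; lia.
    destruct (H n ltac:(lia)) as [x Hx].
    exists (fun i => if Nat.eq_dec i n then x else f i).
    intros i Hi. destruct (Nat.eq_dec i n). subst; auto. apply Hf; lia.
Qed.

Lemma ode_zero l lam (u u1 : R -> R) :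
  0 <= l ->
  (forall x, 0 <= x <= l -> is_derive u x (u1 x) /\ is_derive u1 x (- lam * u x)) ->
  u l = 0 -> u1 l = 0 ->
  forall x, 0 <= x <= l -> u x = 0 /\ u1 x = 0.
Proof.
  intros Hl Hd Hul Hu1l x Hx.
  set (c := Rabs (1 - lam)).
  set (G := fun y => (u y * u y + u1 y * u1 y) * exp (c * y)).
  set (dG := fun y => ((u1 y * u y + u y * u1 y) + ((- lam * u y) * u1 y + u1 y * (- lam * u y))) * exp (c * y)
                      + (u y * u y + u1 y * u1 y) * (c * exp (c * y))).
  assert (HG : forall y, 0 <= y <= l -> is_derive G y (dG y)).
  { intros y Hy. destruct (Hd y Hy) as [D1 D2]. unfold G, dG.
    apply (is_derive_mult' (fun y => u y * u y + u1 y * u1 y) (fun y => exp (c*y))).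
    - apply (is_derive_plus' (fun y => u y * u y) (fun y => u1 y * u1 y)); apply is_derive_mult'; auto.
    - auto_derive; auto. ring. }
  assert (HdG : forall y, 0 <= dG y).
  { intros y. unfold dG.
    assert (0 <= 2 * (1 - lam) * u y * u1 y + c * (u y * u y + u1 y * u1 y)).
    { unfold c. destruct (Rle_dec 0 (1 - lam)).
      - rewrite Rabs_pos_eq by lra.
        assert (0 <= (1-lam) * ((u y + u1 y) * (u y + u1 y))) by (apply Rmult_le_pos; [lra | apply Rle_0_sqr]).
        replace (2 * (1 - lam) * u y * u1 y + (1 - lam) * (u y * u y + u1 y * u1 y)) with ((1-lam) * ((u y + u1 y) * (u y + u1 y))) by ring. lra.
      - rewrite Rabs_left by lra.
        assert (0 <= (-(1-lam)) * ((u y - u1 y) * (u y - u1 y))) by (apply Rmult_le_pos; [lra | apply Rle_0_sqr]).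
        replace (2 * (1 - lam) * u y * u1 y + - (1 - lam) * (u y * u y + u1 y * u1 y)) with ((-(1-lam)) * ((u y - u1 y) * (u y - u1 y))) by ring. lra. }
    pose proof (exp_pos (c * y)).
    replace (((u1 y * u y + u y * u1 y) + ((- lam * u y) * u1 y + u1 y * (- lam * u y))) * exp (c * y)
                      + (u y * u y + u1 y * u1 y) * (c * exp (c * y)))
      with ((2 * (1 - lam) * u y * u1 y + c * (u y * u y + u1 y * u1 y)) * exp (c * y)) by ring.
    apply Rmult_le_pos; lra. }
  assert (HGx : G x <= 0).
  { destruct (Req_dec x l) as [->|Hne].
    - unfold G. rewrite Hul, Hu1l. lra.
    - destruct (MVT_gen G x l dG) as [xi [Hxi Heq]].
      + intros y Hy. rewrite Rmin_left, Rmax_right in Hy by lra. apply HG; lra.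
      + intros y Hy. rewrite Rmin_left, Rmax_right in Hy by lra. eapply is_derive_cont, HG; lra.
      + assert (G l = 0) by (unfold G; rewrite Hul, Hu1l; ring).
        pose proof (HdG xi). assert (0 <= dG xi * (l - x)) by (apply Rmult_le_pos; lra). lra. }
  unfold G in HGx. pose proof (exp_pos (c * x)).
  assert (u x * u x + u1 x * u1 x <= 0).
  { destruct (Rle_dec (u x * u x + u1 x * u1 x) 0); auto.
    assert (0 < (u x * u x + u1 x * u1 x) * exp (c * x)) by (apply Rmult_lt_0_compat; lra). lra. }
  split; nra.
Qed.

Lemma represent l lam (u u1 v v1 : R -> R) :
  0 <= l ->
  (forall x, 0 <= x <= l -> is_derive u x (u1 x) /\ is_derive u1 x (- lam * u x)) ->
  (forall x, is_derive v x (v1 x) /\ is_derive v1 x (- lam * v x)) ->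
  u l = 0 -> v l = 0 -> v1 l <> 0 ->
  forall x, 0 <= x <= l -> u x = (u1 l / v1 l) * v x /\ u1 x = (u1 l / v1 l) * v1 x.
Proof.
  intros Hl Hu Hv Hul Hvl Hv1 x Hx.
  set (c := u1 l / v1 l).
  destruct (ode_zero l lam (fun y => u y - c * v y) (fun y => u1 y - c * v1 y) Hl) with (x := x)
    as [A B]; auto.
  - intros y Hy. destruct (Hu y Hy) as [U1 U2]. destruct (Hv y) as [V1 V2]. split.
    + apply is_derive_minus'; auto. apply is_derive_scal; auto.
    + replace (- lam * (u y - c * v y)) with (- lam * u y - c * (- lam * v y)) by ring.
      apply is_derive_minus'; [exact U2| apply is_derive_scal; exact V2].
  - rewrite Hul, Hvl; ring.
  - unfold c; field; auto.
  - split; lra.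
Qed.

Definition family (lam l : R) (v v1 : R -> R) : Prop :=
  (forall x, is_derive v x (v1 x) /\ is_derive v1 x (- lam * v x)) /\ v l = 0 /\ v1 l <> 0.

Lemma edge_rep l lam u v v1 : 0 <= l -> edge_eq l lam u -> u l = 0 -> family lam l v v1 ->
  exists c, (forall x, 0 <= x <= l -> u x = c * v x) /\ Derive u 0 = c * v1 0.
Proof.
  intros Hl [u1 Hu] Hul [Hv [Hvl Hv1]].
  exists (u1 l / v1 l). split.
  - intros x Hx. apply (represent l lam u u1 v v1); auto.
  - destruct (Hu 0 ltac:(lra)) as [D _]. rewrite (is_derive_unique _ _ _ D).
    apply (represent l lam u u1 v v1); auto; lra.
Qed.

Lemma eigen_rep s eps lam g V V1 W W1 : 0 < eps -> is_eigen s eps lam g ->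
  family lam 1 V V1 -> family lam eps W W1 ->
  exists d (c : nat -> R),
    (forall x, 0 <= x <= 1 -> ge g x = d * V x) /\ Derive (ge g) 0 = d * V1 0 /\
    (forall j, (j < s)%nat -> (forall x, 0 <= x <= eps -> se g j x = c j * W x) /\
                              Derive (se g j) 0 = c j * W1 0).
Proof.
  intros He [E1 [E2 [E3 _]]] FV FW.
  destruct (edge_rep 1 lam (ge g) V V1) as [d [Hd1 Hd2]]; auto; try lra.
  destruct (finite_choice (fun j c => (forall x, 0 <= x <= eps -> se g j x = c * W x) /\
                              Derive (se g j) 0 = c * W1 0) s) as [c Hc].
  { intros j Hj. destruct (E3 j Hj) as [F1 [F2 _]]. apply (edge_rep eps lam); auto; lra. }
  exists d, c. auto.
Qed.

Lemma no_eigen_generic s eps lam g V V1 W W1 : 0 < eps -> is_eigen s eps lam g ->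
  family lam 1 V V1 -> family lam eps W W1 ->
  0 < V 0 -> V1 0 < 0 -> 0 < W 0 -> W1 0 < 0 -> False.
Proof.
  intros He Hg FV FW HV0 HV10 HW0 HW10.
  destruct (eigen_rep s eps lam g V V1 W W1 He Hg FV FW) as [d [c [H1 [H2 H3]]]].
  destruct Hg as [_ [_ [E3 [K Hnz]]]].
  set (g0 := ge g 0).
  assert (Hd : d = g0 / V 0). { unfold g0. rewrite H1 by lra. idtac. field. lra. }
  assert (Hc : forall j, (j < s)%nat -> c j = g0 / W 0).
  { intros j Hj. destruct (E3 j Hj) as [_ [_ C]]. destruct (H3 j Hj) as [C1 _].
    rewrite C1 in C by lra. unfold g0. rewrite <- C. field. lra. }
  rewrite H2 in K.
  rewrite (sumR_ext s _ (fun _ => g0 / W 0 * W1 0)) in K.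
  2:{ intros j Hj. destruct (H3 j Hj) as [_ ->]. rewrite Hc; auto. }
  rewrite sumR_const in K. rewrite Hd in K.
  assert (Hg0 : g0 = 0).
  { assert (K' : g0 * (V1 0 / V 0 + INR s * (W1 0 / W 0)) = 0).
    { assert (E : g0 * (V1 0 / V 0 + INR s * (W1 0 / W 0)) = g0 / V 0 * V1 0 + INR s * (g0 / W 0 * W1 0)) by (field; lra).
      rewrite E. exact K. }
    apply Rmult_integral in K'. destruct K' as [?|K']; auto.
    assert (V1 0 / V 0 < 0). { apply Rdiv_neg_pos; auto. }
    assert (INR s * (W1 0 / W 0) <= 0).
    { assert (W1 0 / W 0 < 0) by (apply Rdiv_neg_pos; auto). pose proof (pos_INR s). nra. }
    lra. }
  destruct Hnz as [[x [Hx N]]|[j [x [Hj [Hx N]]]]].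
  - apply N. rewrite H1 by auto. rewrite Hd, Hg0. field. lra.
  - apply N. destruct (H3 j Hj) as [C1 _]. rewrite C1 by auto. rewrite Hc, Hg0 by auto. field. lra.
Qed.

Lemma fam_sin k l : 0 < k -> family (k * k) l (fun x => sin (k * (l - x))) (fun x => - k * cos (k * (l - x))).
Proof.
  intros Hk. split; [|split].
  - intros x; split; auto_derive; auto; unfold Rminus; ring.
  - replace (k * (l - l)) with 0 by ring. apply sin_0.
  - replace (k * (l - l)) with 0 by ring. rewrite cos_0. lra.
Qed.

Lemma fam_sinh k l : 0 < k -> family (- (k * k)) l
  (fun x => exp (k * (l - x)) - exp (- (k * (l - x))))
  (fun x => - k * (exp (k * (l - x)) + exp (- (k * (l - x))))).
Proof.
  intros Hk. split; [|split].
  - intros x; split; auto_derive; auto; unfold Rminus; ring.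
  - replace (k * (l - l)) with 0 by ring. rewrite Ropp_0. ring.
  - replace (k * (l - l)) with 0 by ring. rewrite Ropp_0, exp_0. lra.
Qed.

Lemma fam_lin l : family 0 l (fun x => l - x) (fun x => -1).
Proof.
  split; [|split].
  - intros x; split; auto_derive; auto; unfold Rminus; ring.
  - ring.
  - lra.
Qed.

Lemma eigen_pos s eps lam g : 0 < eps -> is_eigen s eps lam g -> 0 < lam.
Proof.
  intros He Hg. destruct (Rlt_le_dec 0 lam) as [?|Hle]; auto. exfalso.
  destruct (Rle_lt_or_eq_dec _ _ Hle) as [Hlt|Heq].
  - set (k := sqrt (- lam)).
    assert (Hk : 0 < k) by (apply sqrt_lt_R0; lra).
    assert (Hkk : lam = - (k * k)) by (unfold k; rewrite sqrt_sqrt; lra).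
    rewrite Hkk in Hg.
    apply (no_eigen_generic s eps _ g _ _ _ _ He Hg (fam_sinh k 1 Hk) (fam_sinh k eps Hk)).
    + assert (exp (- (k * (1 - 0))) < exp (k * (1 - 0))) by (apply exp_increasing; nra). lra.
    + pose proof (exp_pos (k * (1 - 0))). pose proof (exp_pos (- (k * (1 - 0)))). nra.
    + assert (exp (- (k * (eps - 0))) < exp (k * (eps - 0))) by (apply exp_increasing; nra). lra.
    + pose proof (exp_pos (k * (eps - 0))). pose proof (exp_pos (- (k * (eps - 0)))). nra.
  - subst lam.
    apply (no_eigen_generic s eps _ g _ _ _ _ He Hg (fam_lin 1) (fam_lin eps)); lra.
Qed.

Lemma Rdiv_neq_0 a b : a <> 0 -> b <> 0 -> a / b <> 0.
Proof. intros. unfold Rdiv. apply Rmult_integral_contrapositive; split; auto. apply Rinv_neq_0_compat; auto. Qed.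

Lemma cont_of_deriv (f : R -> R) z : ex_derive f z -> continuous f z.
Proof.
  intros [l H]. apply continuity_pt_filterlim. apply (is_derive_cont f z l H).
Qed.

Lemma sin_pos_interval k y : 0 < k -> 0 < y -> k * y < PI -> 0 < sin (k * y).
Proof. intros. apply sin_gt_0; nra. Qed.

Lemma pos_struct s eps k g : 0 < eps -> 0 < k -> k * eps < PI -> is_eigen s eps (k * k) g ->
  exists d, (forall x, 0 <= x <= 1 -> ge g x = d * sin (k * (1 - x))) /\
    d * sin k = ge g 0 /\
    d * cos k * sin (k * eps) = - INR s * ge g 0 * cos (k * eps) /\
    (forall j, (j < s)%nat -> forall x, 0 <= x <= eps ->
        se g j x = ge g 0 / sin (k * eps) * sin (k * (eps - x))) /\
    ge g 0 <> 0.
Proof.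
  intros He Hk Hke Hg.
  assert (Hs : 0 < sin (k * eps)) by (apply sin_pos_interval; lra).
  destruct (eigen_rep s eps _ g _ _ _ _ He Hg (fam_sin k 1 Hk) (fam_sin k eps Hk)) as [d [c [H1 [H2 H3]]]].
  destruct Hg as [_ [_ [E3 [K Hnz]]]].
  set (g0 := ge g 0).
  assert (Hd : d * sin k = g0). { unfold g0. rewrite H1 by lra. f_equal. f_equal. ring. }
  assert (Hc : forall j, (j < s)%nat -> c j = g0 / sin (k * eps)).
  { intros j Hj. destruct (E3 j Hj) as [_ [_ C]]. destruct (H3 j Hj) as [C1 _].
    rewrite C1 in C by lra. unfold g0. rewrite <- C. replace (k * (eps - 0)) with (k * eps) by ring. field. lra. }
  rewrite H2 in K.
  rewrite (sumR_ext s _ (fun _ => g0 / sin (k * eps) * (- k * cos (k * eps)))) in K.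
  2:{ intros j Hj. destruct (H3 j Hj) as [_ ->]. rewrite Hc; auto. replace (k * (eps - 0)) with (k * eps) by ring. auto. }
  rewrite sumR_const in K. replace (k * (1 - 0)) with k in K by ring.
  assert (Hcos : d * cos k * sin (k * eps) = - INR s * g0 * cos (k * eps)).
  { assert (E : d * cos k * sin (k * eps) + INR s * g0 * cos (k * eps) =
             - sin (k * eps) / k * (d * (- k * cos k) + INR s * (g0 / sin (k * eps) * (- k * cos (k * eps)))))
      by (field; lra).
    rewrite K in E. lra. }
  exists d. split; [|split; [|split; [|split]]]; auto.
  - intros j Hj x Hx. destruct (H3 j Hj) as [C1 _]. rewrite C1, Hc by auto. reflexivity.
  - intros Hg0. fold g0 in Hg0.
    assert (Hd0 : d = 0).
    { rewrite Hg0 in Hd, Hcos.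
      assert (d * cos k = 0).
      { assert (d * cos k * sin (k * eps) = 0) by lra.
        apply Rmult_integral in H. destruct H; auto. lra. }
      pose proof (sin2_cos2 k). unfold Rsqr in H0. nra. }
    destruct Hnz as [[x [Hx N]]|[j [x [Hj [Hx N]]]]].
    + apply N. rewrite H1 by auto. rewrite Hd0. ring.
    + apply N. destruct (H3 j Hj) as [C1 _]. rewrite C1 by auto. rewrite Hc, Hg0 by auto. field. lra.
Qed.

Lemma RInt_scal_R (f : R -> R) a b c : ex_RInt f a b -> RInt (fun x => c * f x) a b = c * RInt f a b.
Proof. intros H. apply (RInt_scal f a b c H). Qed.

Lemma ginner_same s eps k g h : (0 < s)%nat -> 0 < eps -> 0 < k -> k * eps < PI ->
  is_eigen s eps (k * k) g -> is_eigen s eps (k * k) h -> ginner s eps g h <> 0.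
Proof.
  intros Hs0 He Hk Hke Hg Hh.
  assert (Hs : 0 < sin (k * eps)) by (apply sin_pos_interval; lra).
  destruct (pos_struct s eps k g He Hk Hke Hg) as [dg [G1 [G2 [G3 [G4 G5]]]]].
  destruct (pos_struct s eps k h He Hk Hke Hh) as [dh [F1 [F2 [F3 [F4 F5]]]]].
  set (g0 := ge g 0) in *. set (h0 := ge h 0) in *.
  set (r := h0 / g0).
  assert (Hr : r <> 0) by (unfold r; apply Rdiv_neq_0; auto).
  assert (Hdh : dh = r * dg).
  { assert (X : (dh * g0 - dg * h0) = 0).
    { assert (A1 : (dh * g0 - dg * h0) * sin k = 0) by (rewrite <- G2, <- F2; ring).
      assert (A2 : (dh * g0 - dg * h0) * cos k * sin (k * eps) = 0).
      { replace ((dh * g0 - dg * h0) * cos k * sin (k * eps)) with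
          (g0 * (dh * cos k * sin (k * eps)) - h0 * (dg * cos k * sin (k * eps))) by ring.
        rewrite G3, F3. ring. }
      assert (A3 : (dh * g0 - dg * h0) * cos k = 0).
      { apply Rmult_integral in A2. destruct A2; auto. lra. }
      pose proof (sin2_cos2 k). unfold Rsqr in H. nra. }
    assert (Y : dh * g0 = dg * h0) by lra.
    unfold r. apply (Rmult_eq_reg_r g0); auto.
    replace (h0 / g0 * dg * g0) with (dg * h0) by (field; auto). auto. }
  set (C := g0 / sin (k * eps)).
  assert (HC : C <> 0) by (unfold C; apply Rdiv_neq_0; lra).
  set (A := RInt (fun x => dg * sin (k * (1 - x)) * (dg * sin (k * (1 - x)))) 0 1).
  set (B := RInt (fun x => C * sin (k * (eps - x)) * (C * sin (k * (eps - x)))) 0 eps).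
  assert (EA : forall a b, ex_RInt (fun x => dg * sin (k * (1 - x)) * (dg * sin (k * (1 - x)))) a b).
  { intros a b. apply (ex_RInt_continuous (V:=R_CompleteNormedModule)). intros z _. apply cont_of_deriv. auto_derive. auto. }
  assert (EB : forall a b, ex_RInt (fun x => C * sin (k * (eps - x)) * (C * sin (k * (eps - x)))) a b).
  { intros a b. apply (ex_RInt_continuous (V:=R_CompleteNormedModule)). intros z _. apply cont_of_deriv. auto_derive. auto. }
  assert (HA : 0 <= A).
  { apply RInt_ge_0; auto. lra. intros x _. nra. }
  assert (HB : 0 < B).
  { apply RInt_gt_0; auto.
    - intros x Hx. assert (0 < sin (k * (eps - x))) by (apply sin_pos_interval; nra).
      assert (0 < C * C) by (destruct (Rlt_dec 0 C); nra).
      replace (C * sin (k * (eps - x)) * (C * sin (k * (eps - x)))) with ((C * C) * (sin (k * (eps - x)) * sin (k * (eps - x)))) by ring.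
      apply Rmult_lt_0_compat; auto. apply Rmult_lt_0_compat; auto.
    - intros z _. apply cont_of_deriv. auto_derive. auto. }
  assert (E : ginner s eps g h = r * (A + INR s * B)).
  { unfold ginner.
    rewrite (RInt_ext _ (fun x => r * (dg * sin (k * (1 - x)) * (dg * sin (k * (1 - x)))))).
    2:{ intros x Hx. rewrite Rmin_left, Rmax_right in Hx by lra. rewrite G1, F1 by lra. rewrite Hdh. match goal with |- ?a = ?b => change (@eq R a b) end. ring. }
    rewrite RInt_scal_R by auto. fold A.
    rewrite (sumR_ext s _ (fun _ => r * B)).
    2:{ intros j Hj. rewrite (RInt_ext _ (fun x => r * (C * sin (k * (eps - x)) * (C * sin (k * (eps - x)))))).
        2:{ intros x Hx. rewrite Rmin_left, Rmax_right in Hx by lra. rewrite G4, F4 by (auto; lra).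
            unfold C, r. match goal with |- ?a = ?b => change (@eq R a b) end. field. split; lra. }
        rewrite RInt_scal_R by auto. reflexivity. }
    rewrite sumR_const. ring. }
  rewrite E. apply Rmult_integral_contrapositive. split; auto.
  assert (0 < INR s) by (apply lt_0_INR; auto). nra.
Qed.

Definition Hc (c k : nat -> R) n y := sumR n (fun i => c i * sin (k i * y)).
Definition H1 (c k : nat -> R) n y := sumR n (fun i => c i * k i * cos (k i * y)).
Definition H2 (c k : nat -> R) n y := sumR n (fun i => - (c i * k i * k i) * sin (k i * y)).

Definition freqs (k : nat -> R) n eps :=
  (forall i, (i < n)%nat -> 0 < k i /\ k i * eps < PI) /\
  (forall i j, (i < n)%nat -> (j < n)%nat -> i <> j -> k i <> k j).

Lemma Hc_deriv c k n y : is_derive (Hc c k n) y (H1 c k n y).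
Proof.
  unfold Hc, H1. apply (is_derive_sumR n (fun i y => c i * sin (k i * y))).
  intros i _. auto_derive; auto. ring.
Qed.

Lemma H1_deriv c k n y : is_derive (H1 c k n) y (H2 c k n y).
Proof.
  unfold H1, H2. apply (is_derive_sumR n (fun i y => c i * k i * cos (k i * y))).
  intros i _. auto_derive; auto. ring.
Qed.

Lemma Hc_0 c k n : Hc c k n 0 = 0.
Proof. unfold Hc. apply sumR_zero. intros. rewrite Rmult_0_r, sin_0. ring. Qed.

Lemma rolle' (f df : R -> R) a b : a < b -> (forall x, a <= x <= b -> is_derive f x (df x)) ->
  f a = f b -> exists c, a < c < b /\ df c = 0.
Proof.
  intros Hab Hd Heq.
  assert (pr : forall x, a < x < b -> derivable_pt f x).
  { intros x Hx. exists (df x). apply is_derive_Reals. apply Hd. lra. }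
  destruct (Rolle f a b pr) as [c [P Hc']]; auto.
  - intros x Hx. eapply is_derive_cont. apply Hd; auto.
  - exists c. split; auto. rewrite <- Hc'. symmetry. apply derive_pt_eq_0.
    apply is_derive_Reals. apply Hd. lra.
Qed.

Lemma freqs_restrict k n eps : freqs k (S n) eps -> freqs k n eps.
Proof. intros [A B]. split; intros; [apply A| apply B]; auto; lia. Qed.

Theorem Tprop : forall n c k z N eps, 0 < eps -> freqs k n eps ->
  (exists i, (i < n)%nat /\ c i <> 0) ->
  (forall i j, (i < j)%nat -> (j < N)%nat -> z i < z j) ->
  (forall i, (i < N)%nat -> 0 < z i <= eps /\ Hc c k n (z i) = 0) ->
  (N < n)%nat.
Proof.
  induction n as [|m IH]; intros c k z N eps He Fk [i0 [Hi0 Hci0]] Hz Hzz.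
  - lia.
  - destruct N as [|N']; [lia|].
    destruct (Fk) as [Fpos Fdist].
    destruct (Fpos m ltac:(lia)) as [km_pos km_eps].
    assert (Hphi : forall y, 0 < y <= eps -> 0 < sin (k m * y)).
    { intros y Hy. apply sin_gt_0; nra. }
    destruct (Classical_Prop.classic (exists i, (i < m)%nat /\ c i <> 0)) as [Hnt|Hall].
    2:{ exfalso. destruct (Hzz 0%nat ltac:(lia)) as [Z1 Z2].
        unfold Hc in Z2. simpl in Z2. rewrite sumR_zero in Z2.
        2:{ intros i Hi. destruct (Req_dec (c i) 0) as [->|Hne]; [ring|]. exfalso; apply Hall; eauto. }
        assert (c m <> 0).
        { intro E. apply Hall. exists i0. split; auto. destruct (Nat.eq_dec i0 m). subst; tauto. lia. }
        pose proof (Hphi (z 0%nat) Z1) as Hp. assert (Hq : c m * sin (k m * z 0%nat) = 0) by lra.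
        apply Rmult_integral in Hq. destruct Hq; lra. }
    set (km := k m).
    set (c' := fun i => c i * (km * km - k i * k i)).
    set (phi := fun y => sin (km * y)).
    set (Psi := fun y => phi y * H1 c k (S m) y - km * cos (km * y) * Hc c k (S m) y).
    assert (S1 : forall i, (i < N')%nat -> exists w, z i < w < z (S i) /\ Psi w = 0).
    { intros i Hi.
      assert (Hzi := Hzz i ltac:(lia)). assert (HzSi := Hzz (S i) ltac:(lia)).
      assert (Hlt := Hz i (S i) ltac:(lia) ltac:(lia)).
      destruct (rolle' (fun y => Hc c k (S m) y / phi y)
                  (fun y => (H1 c k (S m) y * phi y - Hc c k (S m) y * (km * cos (km * y))) / (phi y) ^ 2)
                  (z i) (z (S i))) as [w [Hw Hw0]]; auto.
      - intros x Hx. apply is_derive_div.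
        + apply Hc_deriv.
        + unfold phi. auto_derive; auto. ring.
        + unfold phi. assert (0 < sin (km * x)) by (apply Hphi; lra). lra.
      - destruct Hzi as [_ ->]. destruct HzSi as [_ ->]. unfold Rdiv. ring.
      - exists w. split; auto.
        assert (0 < phi w) by (apply Hphi; lra).
        unfold Psi.
        assert (E : (H1 c k (S m) w * phi w - Hc c k (S m) w * (km * cos (km * w))) = 0).
        { apply (Rmult_eq_reg_r (/ (phi w)^2)). rewrite Rmult_0_l. exact Hw0.
          apply Rinv_neq_0_compat. apply pow_nonzero. lra. }
        lra. }
    destruct (finite_choice (fun i w => z i < w < z (S i) /\ Psi w = 0) N' S1) as [w Hw].
    set (w' := fun i => match i with O => 0 | S i' => w i' end).
    assert (Hw'0 : forall i, (i <= N')%nat -> Psi (w' i) = 0 /\ 0 <= w' i < z i).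
    { intros [|i] Hi; simpl.
      - unfold Psi, phi. rewrite Hc_0, Rmult_0_r, sin_0. split; [ring|].
        destruct (Hzz 0%nat ltac:(lia)); lra.
      - destruct (Hw i ltac:(lia)) as [A B]. split; auto.
        destruct (Hzz i ltac:(lia)). assert (Hlt := Hz i (S i) ltac:(lia) ltac:(lia)). lra. }
    assert (Hw'1 : forall i, (i < N')%nat -> w' (S i) < z (S i)).
    { intros i Hi. simpl. destruct (Hw i Hi). lra. }
    assert (Hw'2 : forall i, (i < N')%nat -> z i < w' (S i)).
    { intros i Hi. simpl. destruct (Hw i Hi). lra. }
    assert (Hw'inc : forall i j, (i < j)%nat -> (j <= N')%nat -> w' i < w' j).
    { intros i j Hij Hj. destruct j as [|j]; [lia|].
      assert (w' i < z i) by (apply Hw'0; lia).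
      assert (z i <= z j).
      { destruct (Nat.eq_dec i j) as [->|Hne]; [lra|]. left. apply Hz; lia. }
      assert (z j < w' (S j)) by (apply Hw'2; lia). lra. }
    assert (S2 : forall i, (i < N')%nat -> exists v, w' i < v < w' (S i) /\ Hc c' k m v = 0).
    { intros i Hi.
      destruct (rolle' Psi (fun y => phi y * (H2 c k (S m) y + km * km * Hc c k (S m) y))
                  (w' i) (w' (S i))) as [v [Hv Hv0]].
      - apply Hw'inc; lia.
      - intros x Hx. unfold Psi, phi.
        eapply is_derive_eq.
        + apply is_derive_minus'.
          * apply (is_derive_mult' (fun y => sin (km * y)) (H1 c k (S m))).
            -- auto_derive; auto. 
            -- apply H1_deriv.
          * apply (is_derive_mult' (fun y => km * cos (km * y)) (Hc c k (S m))).
            -- auto_derive; auto.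
            -- apply Hc_deriv.
        + simpl. ring.
      - rewrite (proj1 (Hw'0 i ltac:(lia))), (proj1 (Hw'0 (S i) ltac:(lia))). reflexivity.
      - exists v. split; auto.
        assert (Hvpos : 0 < v) by (pose proof (proj2 (Hw'0 i ltac:(lia))); lra).
        assert (Hveps : v <= eps).
        { assert (w' (S i) < z (S i)) by (apply Hw'1; auto). destruct (Hzz (S i) ltac:(lia)). lra. }
        assert (0 < phi v) by (apply Hphi; lra).
        assert (E : H2 c k (S m) v + km * km * Hc c k (S m) v = 0).
        { apply Rmult_integral in Hv0. destruct Hv0; auto. lra. }
        rewrite <- E. unfold H2, Hc, c'. simpl. fold km.
        transitivity (sumR m (fun i => - (c i * k i * k i) * sin (k i * v) + km * km * (c i * sin (k i * v)))).
        + apply sumR_ext. intros; ring.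
        + rewrite sumR_plus, sumR_scal. ring. }
    destruct (finite_choice (fun i v => w' i < v < w' (S i) /\ Hc c' k m v = 0) N' S2) as [v Hv].
    assert (N' < m)%nat.
    { apply (IH c' k v N' eps He (freqs_restrict _ _ _ Fk)).
      - destruct Hnt as [i [Hi Hci]]. exists i. split; auto. unfold c'.
        apply Rmult_integral_contrapositive. split; auto.
        assert (Hne : k i <> km) by (apply Fdist; lia).
        destruct (Fpos i ltac:(lia)). intro E.
        assert (Hq : (km - k i) * (km + k i) = 0) by (rewrite <- E; ring).
        apply Rmult_integral in Hq. destruct Hq as [Hq|Hq]; [apply Hne; lra|unfold km in Hq; lra].
      - intros i j Hij Hj. destruct (Hv i ltac:(lia)). destruct (Hv j Hj).
        assert (w' (S i) <= w' j).
        { destruct (Nat.eq_dec (S i) j) as [<-|]; [lra|]. left; apply Hw'inc; lia. }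
        lra.
      - intros i Hi. destruct (Hv i Hi) as [[A B] C]. split; auto.
        pose proof (proj2 (Hw'0 i ltac:(lia))).
        assert (w' (S i) < z (S i)) by (apply Hw'1; auto). destruct (Hzz (S i) ltac:(lia)). lra. }
    lia.
Qed.

Lemma sumR_S n f : sumR (S n) f = sumR n f + f n.
Proof. reflexivity. Qed.

Lemma Hc_lin a b c1 c2 k n y :
  Hc (fun i => a * c1 i - b * c2 i) k n y = a * Hc c1 k n y - b * Hc c2 k n y.
Proof. unfold Hc. induction n; simpl; [ring| rewrite IHn; ring]. Qed.

Theorem Eprop : forall m k eps y, 0 < eps -> freqs k (S m) eps ->
  (forall i j, (i < j)%nat -> (j < m)%nat -> y i < y j) ->
  (forall i, (i < m)%nat -> 0 < y i <= eps) ->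
  exists c, (exists i, (i < S m)%nat /\ c i <> 0) /\
            forall j, (j < m)%nat -> Hc c k (S m) (y j) = 0.
Proof.
  induction m as [|m IH]; intros k eps y He Fk Hy Hyb.
  - exists (fun _ => 1). split. exists 0%nat; split; [lia|lra]. intros; lia.
  - destruct (IH k eps y He (freqs_restrict _ _ _ Fk)) as [p [Hp1 Hp2]].
    { intros; apply Hy; lia. } { intros; apply Hyb; lia. }
    set (k' := fun i => if Nat.eq_dec i m then k (S m) else k i).
    destruct Fk as [Fpos Fdist].
    assert (Fk' : freqs k' (S m) eps).
    { split.
      - intros i Hi. unfold k'. destruct (Nat.eq_dec i m); apply Fpos; lia.
      - intros i j Hi Hj Hij. unfold k'.
        destruct (Nat.eq_dec i m); destruct (Nat.eq_dec j m); try lia; apply Fdist; lia. }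
    destruct (IH k' eps y He Fk') as [q [Hq1 Hq2]].
    { intros; apply Hy; lia. } { intros; apply Hyb; lia. }
    set (P := Hc p k (S m)). set (Q := Hc q k' (S m)).
    set (p0 := fun i => if Nat.eq_dec i (S m) then 0 else p i).
    set (q0 := fun i => if Nat.eq_dec i m then 0 else if Nat.eq_dec i (S m) then q m else q i).
    assert (EP : forall x, Hc p0 k (S (S m)) x = P x).
    { intros x. unfold P, Hc. rewrite sumR_S.
      replace (p0 (S m)) with 0 by (unfold p0; destruct (Nat.eq_dec (S m) (S m)); [auto|lia]).
      rewrite Rmult_0_l, Rplus_0_r.
      apply sumR_ext. intros i Hi. unfold p0. destruct (Nat.eq_dec i (S m)); [lia|auto]. }
    assert (EQ : forall x, Hc q0 k (S (S m)) x = Q x).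
    { intros x. unfold Q, Hc. rewrite !sumR_S.
      replace (q0 m) with 0 by (unfold q0; destruct (Nat.eq_dec m m); [auto|lia]).
      replace (q0 (S m)) with (q m) by (unfold q0; destruct (Nat.eq_dec (S m) m); [lia|];
                                        destruct (Nat.eq_dec (S m) (S m)); [auto|lia]).
      replace (k' m) with (k (S m)) by (unfold k'; destruct (Nat.eq_dec m m); [auto|lia]).
      rewrite Rmult_0_l, Rplus_0_r. f_equal.
      apply sumR_ext. intros i Hi. unfold q0, k'.
      destruct (Nat.eq_dec i m); [lia|]. destruct (Nat.eq_dec i (S m)); [lia|auto]. }
    set (c := fun i => P (y m) * q0 i - Q (y m) * p0 i).
    assert (Ec : forall x, Hc c k (S (S m)) x = P (y m) * Q x - Q (y m) * P x).
    { intros x. unfold c. rewrite Hc_lin, EP, EQ. reflexivity. }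
    exists c. split.
    + exists (S m). split; [lia|]. unfold c, p0, q0.
      destruct (Nat.eq_dec (S m) m); [lia|]. destruct (Nat.eq_dec (S m) (S m)); [|lia].
      rewrite Rmult_0_r, Rminus_0_r.
      apply Rmult_integral_contrapositive. split.
      * intro HP.
        assert (S m < S m)%nat; [|lia].
        apply (Tprop (S m) p k y (S m) eps He (freqs_restrict _ _ _ (conj Fpos Fdist)) Hp1 Hy).
        intros i Hi. split; [apply Hyb; auto|].
        destruct (Nat.eq_dec i m) as [->|]; auto. apply Hp2; lia.
      * intro Hqm.
        assert (m < m)%nat; [|lia].
        apply (Tprop m q k' y m eps He (freqs_restrict _ _ _ Fk')).
        -- destruct Hq1 as [i [Hi Hqi]]. exists i. split; auto.
           destruct (Nat.eq_dec i m); [subst; tauto| lia].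
        -- intros; apply Hy; lia.
        -- intros i Hi. split; [apply Hyb; lia|].
           pose proof (Hq2 i Hi) as Z. unfold Hc in Z. rewrite sumR_S, Hqm in Z.
           unfold Hc. lra.
    + intros j Hj. rewrite Ec.
      destruct (Nat.eq_dec j m) as [->|Hne]; [ring|].
      unfold P, Q. rewrite (Hp2 j), (Hq2 j) by lia. ring.
Qed.

Lemma insert_pos (y : nat -> R) m z :
  (forall i j, (i < j)%nat -> (j < m)%nat -> y i < y j) ->
  (forall i, (i < m)%nat -> y i <> z) ->
  exists p, (p <= m)%nat /\ (forall i, (i < p)%nat -> y i < z) /\
            (forall i, (p <= i)%nat -> (i < m)%nat -> z < y i).
Proof.
  induction m; intros Hy Hz.
  - exists 0%nat. split; [lia|]. split; intros; lia.
  - destruct (Rlt_dec (y m) z).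
    + exists (S m). split; [lia|]. split; [|intros; lia].
      intros i Hi. destruct (Nat.eq_dec i m) as [->|]; auto.
      assert (y i < y m) by (apply Hy; lia). lra.
    + assert (z < y m) by (assert (y m <> z) by (apply Hz; lia); lra).
      destruct IHm as [p [Hp1 [Hp2 Hp3]]].
      { intros; apply Hy; lia. } { intros; apply Hz; lia. }
      exists p. split; [lia|]. split; auto.
      intros i Hpi Hi. destruct (Nat.eq_dec i m) as [->|]; auto. apply Hp3; lia.
Qed.

Lemma insert_seq (y : nat -> R) m z :
  (forall i j, (i < j)%nat -> (j < m)%nat -> y i < y j) ->
  (forall i, (i < m)%nat -> y i <> z) ->
  exists w : nat -> R, (forall i j, (i < j)%nat -> (j < S m)%nat -> w i < w j) /\
    (forall i, (i < S m)%nat -> w i = z \/ exists i', (i' < m)%nat /\ w i = y i').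
Proof.
  intros Hy Hz. destruct (insert_pos y m z Hy Hz) as [p [Hp1 [Hp2 Hp3]]].
  exists (fun i => if Nat.ltb i p then y i else if Nat.eqb i p then z else y (pred i)).
  split.
  - intros i j Hij Hj.
    destruct (Nat.ltb_spec i p); destruct (Nat.ltb_spec j p);
    destruct (Nat.eqb_spec i p); destruct (Nat.eqb_spec j p); try lia.
    + apply Hy; lia.
    + apply Hp2; lia.
    + assert (y i < z) by (apply Hp2; lia). assert (z < y (pred j)) by (apply Hp3; lia). lra.
    + apply Hp3; lia.
    + apply Hy; lia.
  - intros i Hi.
    destruct (Nat.ltb_spec i p); [right; exists i; split; [lia|auto]|].
    destruct (Nat.eqb_spec i p); [left; auto|]. right; exists (pred i). split; [lia|auto].
Qed.

Lemma sin_npi n : sin (INR n * PI) = 0.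
Proof.
  induction n. simpl. rewrite Rmult_0_l. apply sin_0.
  rewrite S_INR. replace ((INR n + 1) * PI) with (INR n * PI + PI) by ring.
  rewrite neg_sin, IHn. ring.
Qed.

Lemma cos_npi_sq n : cos (INR n * PI) * cos (INR n * PI) = 1.
Proof. pose proof (sin2_cos2 (INR n * PI)). rewrite sin_npi in H. unfold Rsqr in H. lra. Qed.

Definition Ffun s eps k := sin (k * eps) * cos k + INR s * sin k * cos (k * eps).

Definition egf (eps k : R) := mkGfun (fun x => sin (k * eps) * sin (k * (1 - x)))
                                     (fun j x => sin k * sin (k * (eps - x))).

Lemma egf_eigen s eps k : 0 < eps -> 0 < k -> Ffun s eps k = 0 -> sin k <> 0 -> k * eps < PI ->
  is_eigen s eps (k * k) (egf eps k).
Proof.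
  intros He Hk HF Hsk Hke.
  assert (Hse : 0 < sin (k * eps)) by (apply sin_pos_interval; lra).
  assert (DL : forall x, is_derive (fun x => sin (k * eps) * sin (k * (1 - x))) x
                                  (- sin (k * eps) * k * cos (k * (1 - x)))).
  { intros x. auto_derive; auto. unfold Rminus. ring. }
  assert (DL2 : forall x, is_derive (fun x => - sin (k * eps) * k * cos (k * (1 - x))) x
                                  (- (k * k) * (sin (k * eps) * sin (k * (1 - x))))).
  { intros x. auto_derive; auto. unfold Rminus. ring. }
  assert (DS : forall x, is_derive (fun x => sin k * sin (k * (eps - x))) x
                                  (- sin k * k * cos (k * (eps - x)))).
  { intros x. auto_derive; auto. unfold Rminus. ring. }
  assert (DS2 : forall x, is_derive (fun x => - sin k * k * cos (k * (eps - x))) x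
                                  (- (k * k) * (sin k * sin (k * (eps - x))))).
  { intros x. auto_derive; auto. unfold Rminus. ring. }
  unfold is_eigen, egf; simpl. split; [|split; [|split; [|split]]].
  - exists (fun x => - sin (k * eps) * k * cos (k * (1 - x))). intros x _. split; auto.
  - replace (k * (1 - 1)) with 0 by ring. rewrite sin_0. ring.
  - intros j _. split; [|split].
    + exists (fun x => - sin k * k * cos (k * (eps - x))). intros x _. split; auto.
    + replace (k * (eps - eps)) with 0 by ring. rewrite sin_0. ring.
    + replace (k * (eps - 0)) with (k * eps) by ring. replace (k * (1 - 0)) with k by ring. ring.
  - assert (E1 : Derive (fun x : R => sin (k * eps) * sin (k * (1 - x))) 0 = - sin (k * eps) * k * cos (k * (1 - 0)))
      by (apply is_derive_unique; apply DL).
    rewrite E1.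
    rewrite (sumR_ext s _ (fun _ => - sin k * k * cos (k * (eps - 0)))).
    2:{ intros j _. apply is_derive_unique. apply DS. }
    rewrite sumR_const. replace (k * (eps - 0)) with (k * eps) by ring. replace (k * (1 - 0)) with k by ring.
    unfold Ffun in HF.
    replace (- sin (k * eps) * k * cos k + INR s * (- sin k * k * cos (k * eps)))
      with (- k * (sin (k * eps) * cos k + INR s * sin k * cos (k * eps))) by ring.
    rewrite HF. ring.
  - left. exists 0. split; [lra|]. simpl. rewrite Rminus_0_r, Rmult_1_r.
    apply Rmult_integral_contrapositive. split; [apply Rgt_not_eq; lra| exact Hsk].
Qed.

Lemma exists_eig s eps n : (0 < s)%nat -> 0 < eps -> (1 <= n)%nat -> INR n * PI * eps < PI / 2 ->
  exists k, INR n * PI - PI / 2 < k < INR n * PI /\ is_eigen s eps (k * k) (egf eps k).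
Proof.
  intros Hs He Hn Hb.
  set (b := INR n * PI). set (a := b - PI / 2).
  assert (Hn1 : 1 <= INR n) by (apply (le_INR 1); auto).
  pose proof PI_RGT_0 as HPI.
  assert (Ha : PI / 2 <= a) by (unfold a, b; nra).
  assert (Hab : a < b) by (unfold a; lra).
  assert (Hbe : 0 < b * eps) by (apply Rmult_lt_0_compat; lra).
  assert (Hae : 0 < a * eps) by (apply Rmult_lt_0_compat; lra).
  assert (Hae2 : a * eps < b * eps) by nra.
  assert (ca : cos a = 0).
  { unfold a. rewrite cos_minus, cos_PI2, sin_PI2. unfold b. rewrite sin_npi. ring. }
  assert (sa : sin a = - cos b).
  { unfold a. rewrite sin_minus, cos_PI2, sin_PI2. ring. }
  assert (sb : sin b = 0) by (unfold b; apply sin_npi).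
  assert (cb : cos b * cos b = 1) by (unfold b; apply cos_npi_sq).
  assert (cae : 0 < cos (a * eps)) by (apply cos_gt_0; unfold b in *; lra).
  assert (sbe : 0 < sin (b * eps)) by (apply sin_gt_0; unfold b in *; lra).
  assert (Hs' : 0 < INR s) by (apply lt_0_INR; auto).
  assert (Fa : Ffun s eps a = - INR s * cos b * cos (a * eps)) by (unfold Ffun; rewrite ca, sa; ring).
  assert (Fb : Ffun s eps b = sin (b * eps) * cos b) by (unfold Ffun; rewrite sb; ring).
  assert (Fab : Ffun s eps a * Ffun s eps b < 0).
  { rewrite Fa, Fb.
    replace (- INR s * cos b * cos (a * eps) * (sin (b * eps) * cos b))
      with (- (INR s * cos (a * eps) * sin (b * eps)) * (cos b * cos b)) by ring.
    rewrite cb. assert (0 < INR s * cos (a * eps) * sin (b * eps)) by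
      (apply Rmult_lt_0_compat; [apply Rmult_lt_0_compat|]; auto). lra. }
  assert (Fc : continuity (Ffun s eps)).
  { intros x. apply (is_derive_cont _ x (cos (x * eps) * eps * cos x - sin (x * eps) * sin x +
        INR s * (cos x * cos (x * eps) - sin x * (sin (x * eps) * eps)))).
    unfold Ffun. auto_derive; auto. ring. }
  assert (Hroot : exists k, a <= k <= b /\ Ffun s eps k = 0).
  { destruct (Rlt_dec (Ffun s eps a) 0).
    - assert (0 < Ffun s eps b) by nra.
      destruct (IVT (Ffun s eps) a b Fc Hab) as [k Hk]; auto. eauto.
    - assert (0 < Ffun s eps a) by (destruct (Req_dec (Ffun s eps a) 0) as [E|]; [rewrite E in Fab; lra| lra]).
      assert (Ffun s eps b < 0) by nra.
      assert (Fc' : continuity (fun x => - Ffun s eps x)) by (apply continuity_opp; auto).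
      destruct (IVT (fun x => - Ffun s eps x) a b Fc' Hab) as [k Hk]; try lra.
      exists k. lra. }
  destruct Hroot as [k [Hk HFk]].
  assert (k <> a) by (intro E; subst k; rewrite HFk in Fab; lra).
  assert (k <> b) by (intro E; subst k; rewrite HFk in Fab; lra).
  exists k. split; [unfold a in *; unfold b in *; lra|].
  apply egf_eigen; auto; try lra.
  - intro E. apply sin_eq_0_0 in E. destruct E as [p Hp].
    assert (IZR (Z.of_nat n) - 1/2 < IZR p < IZR (Z.of_nat n)).
    { unfold a, b in *. rewrite INR_IZR_INZ in *. split.
      - assert ((IZR (Z.of_nat n) - 1/2) * PI < IZR p * PI) by lra.
        apply Rmult_lt_reg_r with PI; auto.
      - assert (IZR p * PI < IZR (Z.of_nat n) * PI) by lra.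
        apply Rmult_lt_reg_r with PI; auto. }
    assert (p < Z.of_nat n)%Z by (apply lt_IZR; lra).
    assert (Z.of_nat n - 1 < p)%Z.
    { apply lt_IZR. rewrite minus_IZR. lra. }
    lia.
  - unfold b in *. nra.
Qed.

Lemma lam_mono (lam : nat -> R) : (forall k, lam k <= lam (S k)) ->
  forall i j, (i <= j)%nat -> lam i <= lam j.
Proof.
  intros H i j Hij. induction Hij. lra. specialize (H m). lra.
Qed.

Lemma attained s eps lam f mu g : spectral_seq s eps lam f -> is_eigen s eps mu g ->
  exists i, lam i = mu.
Proof.
  intros [_ [_ [_ Hc]]] Hg. destruct (Hc mu g Hg) as [N [a [Ha [Ge Se]]]].
  destruct Hg as [_ [_ [_ [_ Hnz]]]].
  destruct Hnz as [[x [Hx Nz]]|[j [x [Hj [Hx Nz]]]]].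
  - rewrite Ge in Nz by auto. simpl in Nz. apply sumR_nonzero in Nz.
    destruct Nz as [i [Hi Nz]]. exists i. apply Ha; auto. intro E; apply Nz; rewrite E; ring.
  - rewrite Se in Nz by auto. simpl in Nz. apply sumR_nonzero in Nz.
    destruct Nz as [i [Hi Nz]]. exists i. apply Ha; auto. intro E; apply Nz; rewrite E; ring.
Qed.

Lemma order_bound (lam mu : nat -> R) M : (forall k, lam k <= lam (S k)) ->
  (forall n, (1 <= n)%nat -> (n < M)%nat -> mu n < mu (S n)) ->
  (forall n, (1 <= n)%nat -> (n <= M)%nat -> exists i, lam i = mu n) ->
  forall n, (1 <= n)%nat -> (n <= M)%nat -> exists i, (n - 1 <= i)%nat /\ lam i = mu n.
Proof.
  intros Hm Hmu Hat n Hn1 HnM. induction n as [|n IH]; [lia|].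
  destruct (Nat.eq_dec n 0) as [->|Hn0].
  - destruct (Hat 1%nat) as [i Hi]; auto. exists i; split; [lia|auto].
  - destruct IH as [i [Hi Hli]]; try lia.
    destruct (Hat (S n)) as [j Hj]; auto.
    exists j. split; auto.
    destruct (Compare_dec.le_lt_dec j i) as [Hji|Hij]; [|lia].
    exfalso. pose proof (lam_mono lam Hm j i Hji). pose proof (Hmu n ltac:(lia) ltac:(lia)). lra.
Qed.

Lemma NoDup_prod {A B : Type} (l : list A) (l' : list B) :
  NoDup l -> NoDup l' -> NoDup (list_prod l l').
Proof.
  induction l as [|a l IH]; intros Hl Hl'; simpl. constructor.
  inversion Hl; subst. apply NoDup_app.
  - apply Injective_map_NoDup; auto. intros x y E. inversion E; auto.
  - apply IH; auto.
  - intros [x y] Q1 Q2. apply in_map_iff in Q1. destruct Q1 as [z [E _]]. inversion E; subst.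
    apply in_prod_iff in Q2. tauto.
Qed.

Lemma zeros_final (c kk : nat -> R) L eps (y : nat -> R) :
  0 < eps -> (1 <= L)%nat -> freqs kk L eps -> (exists i, (i < L)%nat /\ c i <> 0) ->
  (forall i j, (i < j)%nat -> (j < L - 1)%nat -> y i < y j) ->
  (forall i, (i < L - 1)%nat -> 0 < y i < eps /\ Hc c kk L (y i) = 0) ->
  Hc c kk L eps <> 0 /\
  (forall z, 0 < z < eps -> Hc c kk L z = 0 -> exists i, (i < L - 1)%nat /\ z = y i).
Proof.
  intros He HL Fk Hnt Hy Hyz. split.
  - intro E.
    assert (L < L)%nat; [|lia].
    apply (Tprop L c kk (fun i => if Nat.ltb i (L - 1) then y i else eps) L eps He Fk Hnt).
    + intros i j Hij Hj. destruct (Nat.ltb_spec i (L-1)); destruct (Nat.ltb_spec j (L-1)); try lia.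
      * apply Hy; lia.
      * destruct (Hyz i ltac:(lia)) as [[_ A] _]. auto.
    + intros i Hi. destruct (Nat.ltb_spec i (L-1)).
      * destruct (Hyz i ltac:(lia)) as [[A B] C]. split; [lra|auto].
      * split; [lra|auto].
  - intros z Hz Hzz.
    destruct (Classical_Prop.classic (exists i, (i < L - 1)%nat /\ z = y i)) as [?|C]; auto.
    exfalso.
    destruct (insert_seq y (L - 1) z Hy) as [w [Hw1 Hw2]].
    { intros i Hi E. apply C. eauto. }
    assert (L < L)%nat; [|lia].
    apply (Tprop L c kk w L eps He Fk Hnt).
    + intros i j Hij Hj. apply Hw1; lia.
    + intros i Hi. destruct (Hw2 i ltac:(lia)) as [->|[i' [Hi' ->]]].
      * split; [lra|auto].
      * destruct (Hyz i' Hi') as [[A B] D]. split; [lra|auto].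
Qed.

Theorem proposition16 :
  forall M s : nat, (0 < M)%nat -> (0 < s)%nat ->
  exists eps1 : R, 0 < eps1 /\
    forall eps : R, 0 < eps < eps1 ->
    forall (lam : nat -> R) (f : nat -> gfun), spectral_seq s eps lam f ->
    forall L : nat, (1 <= L <= M)%nat ->
    exists a : nat -> R,
      small_zero_count s eps (lincomb a L f)
        ((L - 1) + (L - 1) * (s - 1))%nat.
Proof.
  intros M s HM Hs.
  assert (HMR : 1 <= INR M) by (apply (le_INR 1); lia).
  exists (/ (2 * INR M + 2)). split; [apply Rinv_0_lt_compat; lra|].
  intros eps [He Heps] lam f Hspec L [HL1 HLM].
  pose proof PI_RGT_0 as HPI.
  assert (HMe : INR M * eps < 1 / 2).
  { apply Rmult_lt_compat_r with (r := 2 * INR M + 2) in Heps; [|lra].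
    rewrite Rinv_l in Heps by lra. lra. }
  destruct Hspec as [Heig [Hmono [Horth Hcompl]]] eqn:Hsp.
  destruct (finite_choice (fun n kk => (1 <= n)%nat ->
      INR n * PI - PI / 2 < kk < INR n * PI /\ is_eigen s eps (kk * kk) (egf eps kk)) (S M)) as [kf Hkf].
  { intros n Hn. destruct (Nat.eq_dec n 0) as [->|Hn0].
    - exists 0. intros; lia.
    - destruct (exists_eig s eps n Hs He) as [kk Hkk]; [lia| |].
      + assert (INR n <= INR M) by (apply le_INR; lia).
        assert (INR n * eps <= INR M * eps) by (apply Rmult_le_compat_r; lra).
        replace (INR n * PI * eps) with ((INR n * eps) * PI) by ring.
        assert (0 <= INR n * eps) by (apply Rmult_le_pos; [apply pos_INR|lra]). nra.
      + exists kk. intros _. exact Hkk. }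
  set (mu := fun n => kf n * kf n).
  assert (Hmu : forall n, (1 <= n)%nat -> (n < M)%nat -> mu n < mu (S n)).
  { intros n Hn1 HnM. unfold mu.
    destruct (Hkf n ltac:(lia) Hn1) as [[A B] _].
    destruct (Hkf (S n) ltac:(lia) ltac:(lia)) as [[C D] _].
    rewrite S_INR in C. assert (1 <= INR n) by (apply (le_INR 1); lia).
    assert (0 < kf n) by nra. assert (kf n < kf (S n)) by lra. nra. }
  assert (Hat : forall n, (1 <= n)%nat -> (n <= M)%nat -> exists i, lam i = mu n).
  { intros n Hn1 HnM. destruct (Hkf n ltac:(lia) Hn1) as [_ E].
    apply (attained s eps lam f _ _ Hspec E). }
  destruct (order_bound lam mu M Hmono Hmu Hat M ltac:(lia) ltac:(lia)) as [iM [HiM HliM]].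
  destruct (Hkf M ltac:(lia) ltac:(lia)) as [[KM1 KM2] _].
  assert (HkfM : 0 < kf M) by nra.
  assert (Hlb : forall i, (i < M)%nat -> 0 < lam i /\ lam i <= kf M * kf M).
  { intros i Hi. split. apply (eigen_pos s eps _ (f i) He (Heig i)).
    replace (kf M * kf M) with (lam iM) by (rewrite HliM; reflexivity). apply lam_mono; auto. lia. }
  set (kk := fun i => sqrt (lam i)).
  assert (Hkk : forall i, (i < M)%nat -> 0 < kk i /\ kk i * kk i = lam i /\ kk i * eps < PI / 2).
  { intros i Hi. destruct (Hlb i Hi) as [A B].
    assert (E : kk i * kk i = lam i) by (apply sqrt_sqrt; lra).
    assert (P : 0 < kk i) by (apply sqrt_lt_R0; auto).
    split; [auto|split; [auto|]].
    assert (kk i <= kf M) by nra.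
    assert (kf M * eps < INR M * PI * eps) by nra. nra. }
  assert (Hdist : forall i j, (i < j)%nat -> (j < M)%nat -> kk i < kk j).
  { intros i j Hij Hj.
    destruct (Hkk i ltac:(lia)) as [A1 [A2 A3]]. destruct (Hkk j Hj) as [B1 [B2 B3]].
    assert (lam i <= lam j) by (apply lam_mono; auto; lia).
    assert (lam i <> lam j).
    { intro E. apply (ginner_same s eps (kk i) (f i) (f j)); auto; try lra.
      - rewrite A2. apply Heig.
      - rewrite A2, E. apply Heig.
      - apply Horth. lia. }
    assert (lam i < lam j) by lra. nra. }
  destruct L as [|L']; [lia|].
  replace (S L' - 1)%nat with L' by lia.
  assert (Fk : freqs kk (S L') eps).
  { split.
    - intros i Hi. destruct (Hkk i ltac:(lia)) as [A [_ C]]. split; lra.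
    - intros i j Hi Hj Hij. destruct (Compare_dec.lt_eq_lt_dec i j) as [[H|H]|H]; try lia.
      + pose proof (Hdist i j H ltac:(lia)). lra.
      + pose proof (Hdist j i H ltac:(lia)). lra. }
  assert (HLpos : 0 < INR (S L')) by (apply lt_0_INR; lia).
  set (y := fun j => INR (S j) * eps / INR (S L')).
  assert (Hy : forall i j, (i < j)%nat -> (j < L')%nat -> y i < y j).
  { intros i j Hij _. unfold y. apply Rmult_lt_compat_r. apply Rinv_0_lt_compat; auto.
    apply Rmult_lt_compat_r; auto. apply lt_INR; lia. }
  assert (Hyb : forall i, (i < L')%nat -> 0 < y i < eps).
  { intros i Hi. unfold y. assert (0 < INR (S i)) by (apply lt_0_INR; lia).
    assert (INR (S i) < INR (S L')) by (apply lt_INR; lia). split.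
    - apply Rmult_lt_0_compat; [nra| apply Rinv_0_lt_compat; auto].
    - apply (Rmult_lt_reg_r (INR (S L'))); auto. unfold Rdiv. rewrite Rmult_assoc, Rinv_l by lra. nra. }
  destruct (Eprop L' kk eps y He Fk Hy) as [c [Hnt Hcz]].
  { intros i Hi. destruct (Hyb i Hi); split; lra. }
  destruct (zeros_final c kk (S L') eps y He ltac:(lia) Fk Hnt) as [Hend Hchar].
  { replace (S L' - 1)%nat with L' by lia. exact Hy. }
  { replace (S L' - 1)%nat with L' by lia. intros i Hi. split; auto. }
  replace (S L' - 1)%nat with L' in Hchar by lia.
  set (C := fun i => ge (f i) 0 / sin (kk i * eps)).
  assert (HC : forall i, (i < S L')%nat ->
            C i <> 0 /\ 0 < sin (kk i * eps) /\
            forall j, (j < s)%nat -> forall x, 0 <= x <= eps -> se (f i) j x = C i * sin (kk i * (eps - x))).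
  { intros i Hi. destruct (Hkk i ltac:(lia)) as [A [B D]].
    assert (Hsn : 0 < sin (kk i * eps)) by (apply sin_pos_interval; lra).
    assert (Hei : is_eigen s eps (kk i * kk i) (f i)) by (rewrite B; apply Heig).
    destruct (pos_struct s eps (kk i) (f i) He A ltac:(lra) Hei) as [d [_ [_ [_ [G4 G5]]]]].
    split; [|split; [auto|]].
    - unfold C. apply Rdiv_neq_0; auto. lra.
    - intros j Hj x Hx. rewrite G4 by auto. reflexivity. }
  set (a := fun i => c i / C i).
  assert (GE : ge (lincomb a (S L') f) 0 = Hc c kk (S L') eps).
  { unfold lincomb. cbn [ge se]. unfold Hc. apply sumR_ext. intros i Hi. destruct (HC i Hi) as [H1 [H2 _]].
    unfold a. replace (ge (f i) 0) with (C i * sin (kk i * eps)) by (unfold C; field; lra). field. auto. }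
  assert (SE : forall j, (j < s)%nat -> forall x, 0 <= x <= eps ->
            se (lincomb a (S L') f) j x = Hc c kk (S L') (eps - x)).
  { intros j Hj x Hx. unfold lincomb. cbn [ge se]. unfold Hc. apply sumR_ext. intros i Hi. destruct (HC i Hi) as [H1 [H2 H3]].
    rewrite H3 by auto. unfold a. field. auto. }
  exists a. unfold small_zero_count.
  exists (list_prod (seq 0 s) (map (fun i => eps - y i) (seq 0 L'))).
  split; [|split].
  - apply NoDup_prod. apply seq_NoDup.
    apply Injective_map_NoDup; [|apply seq_NoDup].
    intros i j E. unfold y in E.
    assert (INR (S i) = INR (S j)).
    { apply (Rmult_eq_reg_r (eps / INR (S L'))).
      - unfold Rdiv in *. lra.
      - apply Rdiv_neq_0; lra. }
    apply INR_eq in H. lia.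
  - intros [j x]. cbn [fst snd]. rewrite in_prod_iff, in_seq, in_map_iff. split.
    + intros [[_ Hj] [i [Ei Hi]]]. apply in_seq in Hi. destruct (Hyb i ltac:(lia)).
      subst x. split; [lia|]. split; [lra|]. rewrite SE by (auto; lra).
      replace (eps - (eps - y i)) with (y i) by ring. apply Hcz. lia.
    + intros [Hj [Hx Hz]]. rewrite SE in Hz by (auto; lra).
      destruct (Hchar (eps - x) ltac:(lra) Hz) as [i [Hi Ei]].
      split; [lia|]. exists i. split; [lra|]. apply in_seq. lia.
  - left. split.
    + rewrite GE. auto.
    + rewrite length_prod, length_map, !length_seq. destruct s as [|s']; [lia|].
      replace (S s' - 1)%nat with s' by lia. nia.
Qed.
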